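(* Let $A=\sum_{j=1}^\infty E_j$, where $E_j$ are rank-one projections and the series converges in the strong operator topology. Let $\mu=\langle\mu_j\rangle_{j=1}^\infty$ with $0<\mu_j\le\frac12$ and $\lambda=\langle\lambda_j\rangle_{j=1}^\infty$ with $0<\lambda_j<\frac12$, such that $\sum_{j=1}^\infty\mu_j<\infty$, $\sum_{j=1}^\infty\lambda_j<\infty$, and $\sum_{j=1}^\infty\mu_j-\sum_{j=1}^\infty\lambda_j\in\mathbb Z$. Let $\xi$ be the sequence whose entries consist of the $\mu_j$ and the $1-\lambda_j$. Then $\xi\in\operatorname{Adm}(A)$.
   Context: $\operatorname{Adm}(A)$ is the set of sequences $\xi\in\ell^\infty_+$ such that $A=\sum_j\xi_jP_j$ for some rank-one projections $P_j$ (series converging in the strong operator topology if infinite); admissibility is invariant under permutation of the sequence. *)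

(* Defs.v *)
From Stdlib Require Import Reals ZArith.
Open Scope R_scope.

Record C : Type := mkC { Re : R; Im : R }.
Definition C0 : C := mkC 0 0.
Definition C1 : C := mkC 1 0.
Definition RtoC (r : R) : C := mkC r 0.
Definition Cadd (a b : C) : C := mkC (Re a + Re b) (Im a + Im b).
Definition Cmul (a b : C) : C :=
  mkC (Re a * Re b - Im a * Im b) (Re a * Im b + Im a * Re b).
Definition Cconj (a : C) : C := mkC (Re a) (- Im a).

Record CHilbert : Type := {
  vec :> Type;
  vadd : vec -> vec -> vec;
  vzero : vec;
  vopp : vec -> vec;
  smul : C -> vec -> vec;
  inner : vec -> vec -> C;
  vadd_assoc : forall x y z, vadd x (vadd y z) = vadd (vadd x y) z;
  vadd_comm : forall x y, vadd x y = vadd y x;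
  vadd_zero : forall x, vadd x vzero = x;
  vadd_opp : forall x, vadd x (vopp x) = vzero;
  smul_one : forall x, smul C1 x = x;
  smul_assoc : forall a b x, smul a (smul b x) = smul (Cmul a b) x;
  smul_vadd : forall a x y, smul a (vadd x y) = vadd (smul a x) (smul a y);
  smul_cadd : forall a b x, smul (Cadd a b) x = vadd (smul a x) (smul b x);
  inner_add_l : forall x y z, inner (vadd x y) z = Cadd (inner x z) (inner y z);
  inner_smul_l : forall a x y, inner (smul a x) y = Cmul a (inner x y);
  inner_conj_sym : forall x y, inner y x = Cconj (inner x y);
  inner_pos : forall x, 0 <= Re (inner x x);
  inner_def : forall x, inner x x = C0 -> x = vzero;
  complete : forall u : nat -> vec,
    (forall eps, eps > 0 -> exists N, forall m n, (m >= N)%nat -> (n >= N)%nat ->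
        sqrt (Re (inner (vadd (u m) (vopp (u n))) (vadd (u m) (vopp (u n))))) < eps) ->
    exists l, forall eps, eps > 0 -> exists N, forall n, (n >= N)%nat ->
        sqrt (Re (inner (vadd (u n) (vopp l)) (vadd (u n) (vopp l)))) < eps
}.

Arguments vadd {c}. Arguments vzero {c}. Arguments vopp {c}.
Arguments smul {c}. Arguments inner {c}.

Definition vnorm {H : CHilbert} (x : H) : R := sqrt (Re (inner x x)).

Definition operator (H : CHilbert) := H -> H.

Definition rank_one_projection {H : CHilbert} (P : operator H) : Prop :=
  exists e : H, vnorm e = 1 /\ forall x : H, P x = smul (inner x e) e.

Fixpoint psum {H : CHilbert} (T : nat -> operator H) (x : H) (n : nat) : H :=
  match n with
  | O => vzero
  | S n' => vadd (psum T x n') (T n' x)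
  end.

Definition sot_sum {H : CHilbert} (T : nat -> operator H) (A : operator H) : Prop :=
  forall x : H, forall eps, eps > 0 -> exists N, forall n, (n >= N)%nat ->
    vnorm (vadd (psum T x n) (vopp (A x))) < eps.

Definition Adm {H : CHilbert} (A : operator H) (xi : nat -> R) : Prop :=
  (forall j, 0 <= xi j) /\ (exists M, forall j, xi j <= M) /\
  exists P : nat -> operator H,
    (forall j, rank_one_projection (P j)) /\
    sot_sum (fun j x => smul (RtoC (xi j)) (P j x)) A.

(* the sequence consisting of the mu_j and the 1 - lambda_j, interleaved
   (admissibility is permutation invariant, so the order is immaterial) *)
Definition interleave (mu lam : nat -> R) (k : nat) : R :=
  if Nat.even k then mu (Nat.div2 k) else 1 - lam (Nat.div2 k).

(* Main.v *)
Require Import Defs.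
From Stdlib Require Import Reals ZArith Lra Lia ClassicalEpsilon.
Open Scope R_scope.

Lemma Ceq (a b : Defs.C) : Re a = Re b -> Im a = Im b -> a = b.
Proof. destruct a, b; simpl; intros; subst; reflexivity. Qed.

Section Hil.
Variable H : CHilbert.
Implicit Types x y z w u v p q : H.

Lemma vadd_zero_l x : vadd vzero x = x.
Proof. rewrite vadd_comm; apply vadd_zero. Qed.

Lemma smul_C0 x : smul C0 x = vzero.
Proof.
  assert (h : smul C0 x = vadd (smul C0 x) (smul C0 x)).
  { rewrite <- smul_cadd. f_equal. apply Ceq; simpl; ring. }
  set (y := smul C0 x) in *.
  rewrite <- (vadd_opp H y). rewrite h at 2.
  rewrite <- vadd_assoc, vadd_opp, vadd_zero. reflexivity.
Qed.

Lemma vopp_unique x y : vadd x y = vzero -> y = vopp x.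
Proof.
  intro h. rewrite <- (vadd_zero H (vopp x)), <- h, vadd_assoc.
  rewrite (vadd_comm H (vopp x) x), vadd_opp, vadd_zero_l. reflexivity.
Qed.

Lemma vopp_smul x : vopp x = smul (RtoC (-1)) x.
Proof.
  symmetry; apply vopp_unique.
  rewrite <- (smul_one H x) at 1. rewrite <- smul_cadd.
  rewrite <- (smul_C0 x). f_equal. apply Ceq; simpl; ring.
Qed.

Lemma inner_zero_l y : inner vzero y = C0.
Proof.
  rewrite <- (smul_C0 vzero), inner_smul_l. apply Ceq; simpl; ring.
Qed.

Lemma inner_sym x y : inner x y = Cconj (inner y x).
Proof. apply inner_conj_sym. Qed.

Lemma inner_add_r x y z : inner x (vadd y z) = Cadd (inner x y) (inner x z).
Proof.
  rewrite (inner_sym x (vadd y z)), inner_add_l, (inner_sym x y), (inner_sym x z).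
  apply Ceq; simpl; ring.
Qed.

Lemma inner_smul_r a x y : inner x (smul a y) = Cmul (Cconj a) (inner x y).
Proof.
  rewrite (inner_sym x (smul a y)), inner_smul_l, (inner_sym x y).
  apply Ceq; simpl; ring.
Qed.

Lemma inner_self_im x : Im (inner x x) = 0.
Proof.
  pose proof (inner_sym x x) as h.
  assert (Im (inner x x) = Im (Cconj (inner x x))) by (rewrite <- h; reflexivity).
  simpl in H0. lra.
Qed.

Lemma inner_self_re x : 0 <= Re (inner x x).
Proof. apply inner_pos. Qed.

Definition nsq x := Re (inner x x).
Definition cm2 (c : Defs.C) := Re c * Re c + Im c * Im c.

Definition ROP v : H -> H := fun x => smul (inner x v) v.

Lemma inner_comb c1 c2 p q :
  inner (vadd (smul c1 p) (smul c2 q)) (vadd (smul c1 p) (smul c2 q)) =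
  Cadd (Cadd (Cmul (Cmul c1 (Cconj c1)) (inner p p)) (Cmul (Cmul c1 (Cconj c2)) (inner p q)))
       (Cadd (Cmul (Cmul c2 (Cconj c1)) (inner q p)) (Cmul (Cmul c2 (Cconj c2)) (inner q q))).
Proof.
  rewrite !inner_add_l, !inner_add_r, !inner_smul_l, !inner_smul_r.
  apply Ceq; simpl; ring.
Qed.

Lemma nsq_comb_real (a b : R) p q :
  nsq (vadd (smul (RtoC a) p) (smul (RtoC b) q)) =
  a*a * nsq p + 2*a*b * Re (inner p q) + b*b * nsq q.
Proof.
  unfold nsq. rewrite inner_comb. rewrite (inner_sym q p).
  pose proof (inner_self_im p). pose proof (inner_self_im q).
  simpl. nra.
Qed.

Lemma nsq_comb_gen (c : Defs.C) p q :
  nsq (vadd p (smul c q)) =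
  nsq p + 2 * (Re c * Re (inner p q) + Im c * Im (inner p q)) + cm2 c * nsq q.
Proof.
  unfold nsq, cm2. rewrite <- (smul_one H p) at 1 2. rewrite inner_comb.
  rewrite (inner_sym q p).
  pose proof (inner_self_im p). pose proof (inner_self_im q).
  simpl. nra.
Qed.

Lemma nsq_zero x : nsq x = 0 -> x = vzero.
Proof.
  intro h. apply inner_def. apply Ceq; [exact h| apply inner_self_im].
Qed.

Lemma cauchy_schwarz x w : cm2 (inner x w) <= nsq x * nsq w.
Proof.
  destruct (Req_dec (nsq w) 0) as [h0|h0].
  - rewrite h0. apply nsq_zero in h0. subst w.
    assert (e : inner x vzero = C0).
    { rewrite <- (smul_C0 vzero), inner_smul_r. apply Ceq; simpl; ring. }
    rewrite e. unfold cm2; simpl. lra.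
  - set (n := nsq w). set (c := inner x w).
    assert (hn : 0 < n) by (pose proof (inner_self_re w); unfold n, nsq in *; lra).
    pose proof (inner_self_re (vadd x (smul (mkC (- Re c / n) (- Im c / n)) w))) as h.
    fold (nsq (vadd x (smul (mkC (- Re c / n) (- Im c / n)) w))) in h.
    rewrite nsq_comb_gen in h. fold n c in h. unfold cm2 in *. simpl in h.
    assert (e : (- Re c / n * Re c + - Im c / n * Im c) = - (Re c * Re c + Im c * Im c) / n) by (field; lra).
    assert (e2 : (- Re c / n * (- Re c / n) + - Im c / n * (- Im c / n)) * n =  (Re c * Re c + Im c * Im c) / n) by (field; lra).
    rewrite e, e2 in h.
    assert (hh : (Re c * Re c + Im c * Im c) / n <= nsq x) by lra.
    apply (Rmult_le_compat_r n) in hh; [|lra].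
    unfold Rdiv in hh. rewrite Rmult_assoc, Rinv_l in hh by lra. lra.
Qed.

End Hil.

Section Hil2.
Variable H : CHilbert.
Implicit Types x y z w u v p q a b c d : H.

Lemma vadd_swap4 a b c d : vadd (vadd a b) (vadd c d) = vadd (vadd a c) (vadd b d).
Proof.
  rewrite <- !vadd_assoc. f_equal. rewrite !vadd_assoc. f_equal. apply vadd_comm.
Qed.

Lemma ROP_comb (c1 c2 : Defs.C) w u x :
  ROP H (vadd (smul c1 w) (smul c2 u)) x =
  vadd (smul (Cmul (Cadd (Cmul (Cconj c1) (inner x w)) (Cmul (Cconj c2) (inner x u))) c1) w)
       (smul (Cmul (Cadd (Cmul (Cconj c1) (inner x w)) (Cmul (Cconj c2) (inner x u))) c2) u).
Proof.
  unfold ROP. rewrite inner_add_r, !inner_smul_r, smul_vadd, !smul_assoc. reflexivity.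
Qed.

Lemma ROP_smul_real (s : R) v x : ROP H (smul (RtoC s) v) x = smul (RtoC (s*s)) (ROP H v x).
Proof.
  unfold ROP. rewrite inner_smul_r, !smul_assoc. f_equal. apply Ceq; simpl; ring.
Qed.

Lemma ROP_split (s t : R) w x : s*s + t*t = 1 ->
  vadd (ROP H (smul (RtoC s) w) x) (ROP H (smul (RtoC t) w) x) = ROP H w x.
Proof.
  intro h. rewrite !ROP_smul_real, <- smul_cadd.
  rewrite <- (smul_one H (ROP H w x)) at 2. f_equal. apply Ceq; simpl; lra.
Qed.

Lemma ROP_phase (zt : Defs.C) e x : cm2 zt = 1 -> ROP H (smul zt e) x = ROP H e x.
Proof.
  unfold cm2, ROP; intro h. rewrite inner_smul_r, smul_assoc.
  rewrite <- (smul_one H (smul (inner x e) e)), smul_assoc. f_equal.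
  apply Ceq; simpl.
  - transitivity ((Re zt * Re zt + Im zt * Im zt) * Re (inner x e)); [ring | rewrite h; ring].
  - transitivity ((Re zt * Re zt + Im zt * Im zt) * Im (inner x e)); [ring | rewrite h; ring].
Qed.

Lemma ROP_rot (s t : R) w u x : s*s + t*t = 1 ->
  vadd (ROP H (vadd (smul (RtoC s) w) (smul (RtoC t) u)) x)
       (ROP H (vadd (smul (RtoC (-t)) w) (smul (RtoC s) u)) x) =
  vadd (ROP H w x) (ROP H u x).
Proof.
  intro h. rewrite !ROP_comb, vadd_swap4, <- !smul_cadd. unfold ROP. f_equal; f_equal;
  apply Ceq; simpl;
  match goal with |- _ = ?rhs => transitivity ((s*s+t*t)*rhs); [ring | rewrite h; ring] end.
Qed.

Lemma psum_S (T : nat -> operator H) x n : psum T x (S n) = vadd (psum T x n) (T n x).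
Proof. reflexivity. Qed.

Lemma vsub_rearr a b c : vadd (vadd a b) (vopp c) = vadd (vadd a (vopp c)) b.
Proof. rewrite <- !vadd_assoc. f_equal. apply vadd_comm. Qed.

Lemma vadd_cancel_r a b : vadd (vadd a b) (vopp b) = a.
Proof. rewrite <- vadd_assoc, vadd_opp, vadd_zero. reflexivity. Qed.

Lemma nsq_sum_le a b : nsq H (vadd a b) <= 2 * nsq H a + 2 * nsq H b.
Proof.
  replace (vadd a b) with (vadd (smul (RtoC 1) a) (smul (RtoC 1) b))
    by (change (RtoC 1) with Defs.C1; rewrite !smul_one; reflexivity).
  rewrite nsq_comb_real.
  pose proof (inner_self_re H (vadd (smul (RtoC 1) a) (smul (RtoC (-1)) b))) as h.
  fold (nsq H (vadd (smul (RtoC 1) a) (smul (RtoC (-1)) b))) in h.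
  rewrite nsq_comb_real in h. lra.
Qed.

Lemma nsq_smul (c : Defs.C) v : nsq H (smul c v) = cm2 c * nsq H v.
Proof.
  unfold nsq, cm2. rewrite inner_smul_l, inner_smul_r. simpl.
  pose proof (inner_self_im H v). nra.
Qed.

Lemma nsq_vopp v : nsq H (vopp v) = nsq H v.
Proof. rewrite vopp_smul, nsq_smul. unfold cm2; simpl; ring. Qed.

Lemma re_inner_le v x (t : R) : 0 < t ->
  Re (inner v x) <= (t * nsq H v + nsq H x / t) / 2.
Proof.
  intro ht.
  pose proof (inner_self_re H (vadd (smul (RtoC t) v) (smul (RtoC (-1)) x))) as h.
  fold (nsq H (vadd (smul (RtoC t) v) (smul (RtoC (-1)) x))) in h.
  rewrite nsq_comb_real in h.
  assert (h2 : Re (inner v x) * t <= (t*t*nsq H v + nsq H x)/2) by lra.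
  apply Rmult_le_reg_r with (r := t); [lra|].
  replace ((t * nsq H v + nsq H x / t) / 2 * t) with ((t*t*nsq H v + nsq H x)/2) by (field; lra).
  exact h2.
Qed.

End Hil2.

Definition cmod (z : Defs.C) := sqrt (cm2 z).

Lemma cm2_nonneg z : 0 <= cm2 z.
Proof. unfold cm2; nra. Qed.

Lemma cm2_mul a b : cm2 (Cmul a b) = cm2 a * cm2 b.
Proof. unfold cm2; simpl; ring. Qed.

Lemma cm2_conj a : cm2 (Cconj a) = cm2 a.
Proof. unfold cm2; simpl; ring. Qed.

Lemma cmod_mul a b : cmod (Cmul a b) = cmod a * cmod b.
Proof. unfold cmod. rewrite cm2_mul, sqrt_mult; auto using cm2_nonneg. Qed.

Lemma cmod_conj a : cmod (Cconj a) = cmod a.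
Proof. unfold cmod. rewrite cm2_conj. reflexivity. Qed.

Lemma cmod_real s : cmod (RtoC s) = Rabs s.
Proof. unfold cmod, cm2; simpl. rewrite Rmult_0_l, Rplus_0_r. apply sqrt_Rsqr_abs. Qed.

Lemma cmod_nonneg a : 0 <= cmod a.
Proof. apply sqrt_pos. Qed.

Lemma cmod_add a b : cmod (Cadd a b) <= cmod a + cmod b.
Proof.
  unfold cmod. pose proof (cm2_nonneg a). pose proof (cm2_nonneg b).
  apply Rsqr_incr_0_var; [| pose proof (sqrt_pos (cm2 a)); pose proof (sqrt_pos (cm2 b)); lra].
  unfold Rsqr. rewrite sqrt_sqrt by apply cm2_nonneg.
  replace ((sqrt (cm2 a) + sqrt (cm2 b)) * (sqrt (cm2 a) + sqrt (cm2 b))) with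
    (sqrt (cm2 a) * sqrt (cm2 a) + sqrt (cm2 b) * sqrt (cm2 b) + 2 * (sqrt (cm2 a) * sqrt (cm2 b))) by ring.
  rewrite !sqrt_sqrt by assumption. rewrite <- sqrt_mult by assumption.
  unfold cm2 in *; simpl.
  set (p := Re a * Re b + Im a * Im b).
  assert (hp : p <= sqrt ((Re a * Re a + Im a * Im a) * (Re b * Re b + Im b * Im b))).
  { destruct (Rle_dec p 0). { pose proof (sqrt_pos ((Re a * Re a + Im a * Im a) * (Re b * Re b + Im b * Im b))). lra. }
    rewrite <- (sqrt_Rsqr p) by lra. apply sqrt_le_1_alt. unfold Rsqr, p.
    pose proof (Rle_0_sqr (Re a*Im b - Im a*Re b)). unfold Rsqr in *. nra. }
  unfold p in hp. nra.
Qed.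

Definition phase (z : Defs.C) : Defs.C :=
  if Rlt_dec 0 (cmod z) then mkC (- Im z / cmod z) (Re z / cmod z) else Defs.C1.

Lemma phase_cm2 z : cm2 (phase z) = 1.
Proof.
  unfold phase. destruct (Rlt_dec 0 (cmod z)) as [h|h].
  - unfold cm2; simpl. assert (e : cmod z * cmod z = cm2 z) by (apply sqrt_sqrt, cm2_nonneg).
    unfold cm2 in e.
    transitivity ((Re z * Re z + Im z * Im z) / (cmod z * cmod z)); [field; lra|].
    rewrite <- e. field. lra.
  - unfold cm2; simpl; ring.
Qed.

Lemma phase_orth z : Re (Cmul (Cconj (phase z)) z) = 0.
Proof.
  unfold phase. destruct (Rlt_dec 0 (cmod z)) as [h|h].
  - simpl. field. lra.
  - assert (hc : cmod z = 0) by (pose proof (cmod_nonneg z); lra).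
    unfold cmod in hc. apply sqrt_eq_0 in hc; [|apply cm2_nonneg].
    unfold cm2 in hc. simpl. assert (Re z = 0) by nra. rewrite H. ring.
Qed.

Section Constr.
Variable H : CHilbert.
Variable e : nat -> H.
Hypothesis he : forall j, nsq H (e j) = 1.
Variable xi : nat -> R.
Hypothesis hxi : forall k, 0 < xi k < 1.

Definition step (k : nat) (s : nat * H) : H * (nat * H) :=
  let (K, w) := s in
  let o := xi k in let r := nsq H w in
  if Rle_dec o r then (smul (RtoC (sqrt (o / r))) w, (K, smul (RtoC (sqrt ((r - o) / r))) w))
  else let u := smul (phase (inner w (e K))) (e K) in
       let a := sqrt ((1 - o) / (1 - r)) in let b := sqrt ((o - r) / (1 - r)) in
       (vadd (smul (RtoC a) w) (smul (RtoC b) u),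
        (S K, vadd (smul (RtoC (- b)) w) (smul (RtoC a) u))).

Fixpoint st (k : nat) : nat * H :=
  match k with O => (O, vzero) | S k => snd (step k (st k)) end.

Definition outv k := fst (step k (st k)).

Definition gg (x y : H) := cmod (inner x y).

Lemma nsq_nonneg y : 0 <= nsq H y.
Proof. apply inner_self_re. Qed.

Lemma gg_smul_real x (s : R) y : gg x (smul (RtoC s) y) = Rabs s * gg x y.
Proof. unfold gg. rewrite inner_smul_r, cmod_mul, cmod_conj, cmod_real. reflexivity. Qed.

Lemma div_nonneg a b : 0 <= a -> 0 < b -> 0 <= a / b.
Proof. intros. unfold Rdiv. apply Rmult_le_pos; [lra|]. apply Rlt_le, Rinv_0_lt_compat; lra. Qed.

Lemma div_le_1 a b : 0 < b -> a <= b -> a / b <= 1.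
Proof.
  intros. assert (ee : a / b = 1 - (b - a) / b) by (field; lra).
  rewrite ee. pose proof (div_nonneg (b - a) b). lra.
Qed.

Lemma sq_sqrt_div a b : 0 <= a -> 0 < b -> sqrt (a / b) * sqrt (a / b) = a / b.
Proof. intros. apply sqrt_sqrt. apply div_nonneg; lra. Qed.

Lemma step_split_spec k K w :
  xi k <= nsq H w ->
  let v := fst (step k (K, w)) in let K' := fst (snd (step k (K, w))) in
  let w' := snd (snd (step k (K, w))) in
  K' = K /\ nsq H w' = nsq H w - xi k /\ nsq H v = xi k /\
  (forall x, vadd (ROP H v x) (ROP H w' x) = ROP H w x) /\
  (forall x, gg x w' <= gg x w).
Proof.
  intros ho. simpl. destruct (Rle_dec (xi k) (nsq H w)) as [_|nn]; [|contradiction].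
  simpl. pose proof (hxi k). set (r := nsq H w) in *. set (o := xi k) in *.
  assert (hr : 0 < r) by lra.
  assert (e1 : sqrt (o / r) * sqrt (o / r) = o / r) by (apply sq_sqrt_div; lra).
  assert (e2 : sqrt ((r - o) / r) * sqrt ((r - o) / r) = (r - o) / r) by (apply sq_sqrt_div; lra).
  repeat split.
  - rewrite nsq_smul. unfold cm2; simpl. rewrite Rmult_0_l, Rplus_0_r, e2. fold r. field. lra.
  - rewrite nsq_smul. unfold cm2; simpl. rewrite Rmult_0_l, Rplus_0_r, e1. fold r. field. lra.
  - intro x. apply ROP_split. rewrite e1, e2. field. lra.
  - intro x. rewrite gg_smul_real. rewrite Rabs_pos_eq by apply sqrt_pos.
    assert (sqrt ((r - o) / r) <= 1).
    { rewrite <- sqrt_1. apply sqrt_le_1_alt. apply Rmult_le_reg_r with r; [lra|].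
      unfold Rdiv. rewrite Rmult_assoc, Rinv_l by lra. lra. }
    pose proof (cmod_nonneg (inner x w)). unfold gg. nra.
Qed.

Lemma step_move_spec k K w :
  nsq H w < xi k ->
  let v := fst (step k (K, w)) in let K' := fst (snd (step k (K, w))) in
  let w' := snd (snd (step k (K, w))) in
  K' = S K /\ nsq H w' = nsq H w + 1 - xi k /\ nsq H v = xi k /\
  (forall x, vadd (ROP H v x) (ROP H w' x) = vadd (ROP H w x) (ROP H (e K) x)) /\
  (forall x, gg x w' <= sqrt ((xi k - nsq H w) / (1 - nsq H w)) * gg x w +
                       sqrt ((1 - xi k) / (1 - nsq H w)) * gg x (e K)).
Proof.
  intros ho. simpl. destruct (Rle_dec (xi k) (nsq H w)) as [nn|_]; [lra|].
  simpl. pose proof (hxi k). pose proof (nsq_nonneg w).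
  set (r := nsq H w) in *. set (o := xi k) in *.
  set (zt := phase (inner w (e K))).
  set (a := sqrt ((1 - o) / (1 - r))). set (b := sqrt ((o - r) / (1 - r))).
  assert (ea : a * a = (1 - o) / (1 - r)) by (apply sq_sqrt_div; lra).
  assert (eb : b * b = (o - r) / (1 - r)) by (apply sq_sqrt_div; lra).
  assert (hab : a * a + b * b = 1) by (rewrite ea, eb; field; lra).
  assert (hu : nsq H (smul zt (e K)) = 1) by (rewrite nsq_smul, he; unfold zt; rewrite phase_cm2; ring).
  assert (ho0 : Re (inner w (smul zt (e K))) = 0) by (rewrite inner_smul_r; apply phase_orth).
  repeat split.
  - rewrite nsq_comb_real, hu, ho0. fold r.
    replace (- b * - b) with (b * b) by ring. rewrite ea, eb. field. lra.
  - rewrite nsq_comb_real, hu, ho0. fold r. rewrite ea, eb. field. lra.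
  - intro x. rewrite ROP_rot by exact hab. f_equal. apply ROP_phase. apply phase_cm2.
  - intro x. unfold gg. rewrite inner_add_r, !inner_smul_r.
    eapply Rle_trans; [apply cmod_add|].
    rewrite !cmod_mul, !cmod_conj, !cmod_real.
    assert (hz : cmod zt = 1) by (unfold cmod, zt; rewrite phase_cm2, sqrt_1; reflexivity).
    rewrite hz. rewrite Rabs_Ropp, !Rabs_pos_eq by apply sqrt_pos. fold a b. lra.
Qed.


Definition Kof k := fst (st k).
Definition wof k := snd (st k).
Definition rof k := nsq H (wof k).

Lemma st_S k : st (S k) = snd (step k (st k)).
Proof. reflexivity. Qed.

Lemma step_at k :
  (xi k <= rof k /\ Kof (S k) = Kof k /\ rof (S k) = rof k - xi k /\ nsq H (outv k) = xi k /\
   (forall x, vadd (ROP H (outv k) x) (ROP H (wof (S k)) x) = ROP H (wof k) x) /\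
   (forall x, gg x (wof (S k)) <= gg x (wof k)))
  \/
  (rof k < xi k /\ Kof (S k) = S (Kof k) /\ rof (S k) = rof k + 1 - xi k /\ nsq H (outv k) = xi k /\
   (forall x, vadd (ROP H (outv k) x) (ROP H (wof (S k)) x) =
              vadd (ROP H (wof k) x) (ROP H (e (Kof k)) x)) /\
   (forall x, gg x (wof (S k)) <= sqrt ((xi k - rof k) / (1 - rof k)) * gg x (wof k) +
                       sqrt ((1 - xi k) / (1 - rof k)) * gg x (e (Kof k)))).
Proof.
  unfold rof, Kof, wof, outv. rewrite st_S. destruct (st k) as [K w].
  change (fst (K, w)) with K. change (snd (K, w)) with w.
  destruct (Rle_dec (xi k) (nsq H w)) as [h|h].
  - left. pose proof (step_split_spec k K w h) as sp. cbv zeta in sp. tauto.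
  - right. assert (h' : nsq H w < xi k) by lra.
    pose proof (step_move_spec k K w h') as sp. cbv zeta in sp. tauto.
Qed.

Lemma r_bounds k : 0 <= rof k < 1.
Proof.
  induction k.
  - unfold rof, wof; simpl. unfold nsq. rewrite inner_zero_l. simpl. lra.
  - pose proof (hxi k). destruct (step_at k) as [h|h]; lra.
Qed.

Fixpoint ps (f : nat -> R) (n : nat) : R :=
  match n with O => 0 | S n => ps f n + f n end.

Lemma r_T k : rof k + ps xi k = INR (Kof k).
Proof.
  induction k.
  - unfold rof, wof, Kof; simpl. unfold nsq. rewrite inner_zero_l. simpl. lra.
  - simpl ps. destruct (step_at k) as [h|h].
    + destruct h as [_ [hK [hr _]]]. rewrite hK, hr. lra.
    + destruct h as [_ [hK [hr _]]]. rewrite hK, hr, S_INR. lra.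
Qed.

Lemma smul_vzero (c : Defs.C) : smul c (@vzero H) = vzero.
Proof.
  rewrite <- (smul_C0 H vzero) at 1. rewrite smul_assoc.
  replace (Cmul c C0) with C0 by (apply Ceq; simpl; ring). apply smul_C0.
Qed.

Definition Eop (j : nat) : operator H := fun x => ROP H (e j) x.
Definition Oop (j : nat) : operator H := fun x => ROP H (outv j) x.

Lemma invariant k x : psum Eop x (Kof k) = vadd (psum Oop x k) (ROP H (wof k) x).
Proof.
  induction k.
  - unfold Kof, wof; simpl. unfold ROP. rewrite smul_vzero, vadd_zero. reflexivity.
  - destruct (step_at k) as [h|h].
    + destruct h as [_ [hK [_ [_ [hR _]]]]]. rewrite hK, IHk. simpl psum.
      rewrite <- vadd_assoc. f_equal. unfold Oop. symmetry. apply hR.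
    + destruct h as [_ [hK [_ [_ [hR _]]]]]. rewrite hK. simpl psum. rewrite IHk.
      rewrite <- !vadd_assoc. f_equal. unfold Oop. symmetry. apply hR.
Qed.


Section Gx.
Variable x : H.

Definition gk k := gg x (wof k).
Definition hj j := gg x (e j).
Definition PH n := ps (fun j => hj j * hj j) n.
Definition beta k := if Rle_dec (xi k) (rof k) then 1 else sqrt ((xi k - rof k) / (1 - rof k)).

Fixpoint Pr (s d : nat) : R :=
  match d with O => 1 | S d => Pr s d * (beta (s + d) * beta (s + d)) end.

Lemma beta_bounds k : 0 <= beta k <= 1.
Proof.
  unfold beta. destruct (Rle_dec (xi k) (rof k)); [lra|].
  pose proof (r_bounds k). pose proof (hxi k). split; [apply sqrt_pos|].
  apply Rle_trans with (sqrt 1); [apply sqrt_le_1_alt; apply div_le_1; lra| rewrite sqrt_1; lra].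
Qed.

Lemma Pr_bounds s d : 0 <= Pr s d <= 1.
Proof.
  induction d; simpl; [lra|]. pose proof (beta_bounds (s + d)). nra.
Qed.

Lemma Pr_mono s d d' : (d <= d')%nat -> Pr s d' <= Pr s d.
Proof.
  induction 1; [lra|]. simpl. pose proof (beta_bounds (s + m)) as hb. pose proof (Pr_bounds s m).
  assert (hbb : 0 <= beta (s + m) * beta (s + m) <= 1) by nra.
  assert (Pr s m * (beta (s + m) * beta (s + m)) <= Pr s m) by nra. lra.
Qed.

Lemma PH_mono a b : (a <= b)%nat -> PH a <= PH b.
Proof.
  induction 1; [lra|]. unfold PH in *; simpl. pose proof (Rle_0_sqr (hj m)). unfold Rsqr in *. lra.
Qed.

Lemma comb_ineq (a b S h : R) : 0 <= a -> 0 <= b -> a*a + b*b = 1 -> 0 <= S -> 0 <= h ->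
  b * sqrt S + a * h <= sqrt (S + h * h).
Proof.
  intros ha hb hab hS hh.
  pose proof (sqrt_pos S) as hs. pose proof (sqrt_sqrt S hS) as es.
  apply Rsqr_incr_0_var; [| apply sqrt_pos]. unfold Rsqr.
  rewrite sqrt_sqrt by nra.
  pose proof (Rle_0_sqr (a * sqrt S - b * h)). unfold Rsqr in *. nra.
Qed.

Definition alpha k := if Rle_dec (xi k) (rof k) then 0 else sqrt ((1 - xi k) / (1 - rof k)).

Lemma alpha_beta k : 0 <= alpha k /\ alpha k * alpha k + beta k * beta k = 1.
Proof.
  unfold alpha, beta. destruct (Rle_dec (xi k) (rof k)); [lra|].
  pose proof (r_bounds k). pose proof (hxi k). split; [apply sqrt_pos|].
  rewrite !sqrt_sqrt by (apply div_nonneg; lra). field. lra.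
Qed.

Lemma Kof_step k : Kof (S k) = Kof k \/ Kof (S k) = S (Kof k).
Proof. destruct (step_at k) as [h|h]; [left|right]; apply h. Qed.

Lemma Kof_mono a b : (a <= b)%nat -> (Kof a <= Kof b)%nat.
Proof. induction 1; [lia|]. destruct (Kof_step m); lia. Qed.

Lemma g_step k : gk (S k) <= beta k * gk k + alpha k * sqrt (PH (Kof (S k)) - PH (Kof k)).
Proof.
  unfold gk, beta, alpha. destruct (step_at k) as [h|h].
  - destruct h as [hle [hK [_ [_ [_ hg]]]]]. destruct (Rle_dec (xi k) (rof k)); [|contradiction].
    specialize (hg x). lra.
  - destruct h as [hlt [hK [_ [_ [_ hg]]]]]. destruct (Rle_dec (xi k) (rof k)); [lra|].
    rewrite hK. unfold PH at 1. simpl ps. fold (PH (Kof k)).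
    replace (PH (Kof k) + hj (Kof k) * hj (Kof k) - PH (Kof k)) with (hj (Kof k) * hj (Kof k)) by ring.
    rewrite sqrt_square by (apply cmod_nonneg). specialize (hg x).
    unfold hj. exact hg.
Qed.

Lemma g_inv s d : gk (s + d) <= sqrt (Pr s d) * gk s + sqrt (PH (Kof (s + d)) - PH (Kof s)).
Proof.
  induction d.
  - simpl. rewrite Nat.add_0_r, sqrt_1. replace (PH (Kof s) - PH (Kof s)) with 0 by ring.
    rewrite sqrt_0. lra.
  - replace (s + S d)%nat with (S (s + d)) by lia.
    eapply Rle_trans; [apply g_step|]. simpl Pr.
    pose proof (beta_bounds (s + d)) as hb. pose proof (Pr_bounds s d) as hP.
    pose proof (alpha_beta (s + d)) as [ha hab].
    rewrite sqrt_mult by nra. rewrite sqrt_square by lra.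
    set (b := beta (s + d)) in *. set (a := alpha (s + d)) in *.
    set (S0 := PH (Kof (s + d)) - PH (Kof s)).
    set (h2 := PH (Kof (S (s + d))) - PH (Kof (s + d))).
    assert (hS0 : 0 <= S0) by (unfold S0; pose proof (PH_mono _ _ (Kof_mono s (s + d) ltac:(lia))); lra).
    assert (hh2 : 0 <= h2) by (unfold h2; pose proof (PH_mono _ _ (Kof_mono (s + d) (S (s + d)) ltac:(lia))); lra).
    replace (PH (Kof (S (s + d))) - PH (Kof s)) with (S0 + sqrt h2 * sqrt h2)
      by (rewrite sqrt_sqrt by lra; unfold S0, h2; ring).
    assert (hg0 : 0 <= gk (s + d)) by apply cmod_nonneg.
    assert (hgs : 0 <= gk s) by apply cmod_nonneg.
    assert (b * gk (s + d) <= sqrt (Pr s d) * b * gk s + b * sqrt S0).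
    { replace (sqrt (Pr s d) * b * gk s + b * sqrt S0) with (b * (sqrt (Pr s d) * gk s + sqrt S0)) by ring.
      apply Rmult_le_compat_l; [lra|]. exact IHd. }
    pose proof (comb_ineq a b S0 (sqrt h2) ha (proj1 hb) hab hS0 (sqrt_pos h2)).
    lra.
Qed.


Lemma gk_bound k : gk k <= sqrt (nsq H x * rof k).
Proof.
  unfold gk, gg, cmod, rof. apply sqrt_le_1_alt. apply cauchy_schwarz.
Qed.

Lemma sqrt_le_of_sq a b : 0 <= b -> a <= b * b -> sqrt a <= b.
Proof.
  intros hb h. rewrite <- (sqrt_square b hb). destruct (Rle_dec 0 a).
  - apply sqrt_le_1_alt. exact h.
  - rewrite sqrt_neg_0 by lra. apply sqrt_pos.
Qed.

Lemma g_conv :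
  (forall eps, eps > 0 -> exists M, forall a b, (M <= a)%nat -> (a <= b)%nat -> PH b - PH a <= eps) ->
  (forall M, exists N, (M <= Kof N)%nat) ->
  ((forall dl, dl > 0 -> forall N, exists k, (N <= k)%nat /\ rof k <= dl) \/
   (forall N, exists s, (N <= s)%nat /\ forall dl, dl > 0 -> exists d, Pr s d <= dl)) ->
  forall eps, eps > 0 -> exists N, forall k, (N <= k)%nat -> gk k <= eps.
Proof.
  intros hPH hK hAB eps heps.
  set (eta := eps / 2). assert (heta : 0 < eta) by (unfold eta; lra).
  destruct (hPH (eta * eta)) as [M hM]; [nra|].
  destruct (hK M) as [N0 hN0].
  set (X := nsq H x). assert (hX : 0 <= X) by apply nsq_nonneg.
  set (dl := eta * eta / (X + 1)).
  assert (hdl : dl > 0) by (unfold dl; apply Rdiv_lt_0_compat; nra).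
  assert (hXdl : X * dl <= eta * eta).
  { unfold dl. apply Rmult_le_reg_r with (X + 1); [lra|].
    replace (X * (eta * eta / (X + 1)) * (X + 1)) with (X * (eta * eta)) by (field; lra). nra. }
  assert (tail : forall s d, (N0 <= s)%nat -> sqrt (PH (Kof (s + d)) - PH (Kof s)) <= eta).
  { intros s0 d0 hs. apply sqrt_le_of_sq; [lra|]. apply hM.
    - pose proof (Kof_mono _ _ hs). lia.
    - apply Kof_mono. lia. }
  destruct hAB as [hA|hB].
  - destruct (hA dl hdl N0) as [k0 [hk0 hr0]].
    exists k0. intros k hk. replace k with (k0 + (k - k0))%nat by lia.
    eapply Rle_trans; [apply g_inv|].
    pose proof (tail k0 (k - k0)%nat hk0).
    assert (hg0 : gk k0 <= eta).
    { eapply Rle_trans; [apply gk_bound|]. apply sqrt_le_of_sq; [lra|].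
      pose proof (r_bounds k0). fold X. nra. }
    pose proof (Pr_bounds k0 (k - k0)).
    assert (sqrt (Pr k0 (k - k0)) <= 1) by (rewrite <- sqrt_1; apply sqrt_le_1_alt; lra).
    assert (0 <= gk k0) by apply cmod_nonneg. pose proof (sqrt_pos (Pr k0 (k - k0))).
    unfold eta in *. nra.
  - destruct (hB N0) as [s0 [hs0 hP]]. destruct (hP dl hdl) as [d0 hd0].
    exists (s0 + d0)%nat. intros k hk. replace k with (s0 + (k - s0))%nat by lia.
    eapply Rle_trans; [apply g_inv|].
    pose proof (tail s0 (k - s0)%nat hs0).
    assert (hPd : Pr s0 (k - s0) <= dl) by (pose proof (Pr_mono s0 d0 (k - s0) ltac:(lia)); lra).
    pose proof (Pr_bounds s0 (k - s0)).
    assert (hgs : gk s0 <= sqrt X).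
    { eapply Rle_trans; [apply gk_bound|]. apply sqrt_le_1_alt. pose proof (r_bounds s0). fold X. nra. }
    assert (sqrt (Pr s0 (k - s0)) * gk s0 <= eta).
    { eapply Rle_trans with (sqrt (Pr s0 (k - s0)) * sqrt X).
      - apply Rmult_le_compat_l; [apply sqrt_pos| exact hgs].
      - rewrite <- sqrt_mult by lra. apply sqrt_le_of_sq; [lra|]. nra. }
    unfold eta in *. lra.
Qed.

End Gx.

End Constr.

Lemma ps_sum f n : ps f (S n) = sum_f_R0 f n.
Proof. induction n; simpl; [ring|]. simpl in IHn. rewrite IHn. ring. Qed.

Lemma ps_lim f L : infinite_sum f L -> forall eps, eps > 0 -> exists N, forall n, (N <= n)%nat -> Rabs (ps f n - L) < eps.
Proof.
  intros h eps he. destruct (h eps he) as [N hN]. exists (S N). intros n hn.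
  destruct n as [|n]; [lia|]. rewrite ps_sum. apply hN. lia.
Qed.

Lemma ps_mono f : (forall j, 0 < f j) -> forall a b, (a <= b)%nat -> ps f a <= ps f b.
Proof. intros hf a b hab. induction hab; [lra|]. simpl. pose proof (hf m). lra. Qed.

Lemma ps_le_lim f L : (forall j, 0 < f j) -> infinite_sum f L -> forall n, ps f n <= L.
Proof.
  intros hf h n. destruct (Rle_dec (ps f n) L) as [|hn]; [assumption|].
  exfalso. destruct (ps_lim f L h (ps f n - L)) as [N hN]; [lra|].
  specialize (hN (max N n) ltac:(lia)). pose proof (ps_mono f hf n (max N n) ltac:(lia)).
  apply Rabs_def2 in hN. lra.
Qed.

Lemma int_zero (m : Z) : -1 < IZR m < 1 -> m = 0%Z.
Proof.
  intros [h1 h2]. apply lt_IZR in h2. change (-1) with (IZR (-1)) in h1. apply lt_IZR in h1. lia.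
Qed.

Lemma int_one (m : Z) : 0 < IZR m < 2 -> m = 1%Z.
Proof.
  intros [h1 h2]. apply lt_IZR in h1. change 2 with (IZR 2) in h2. apply lt_IZR in h2. lia.
Qed.

Lemma xi_even mu lam j : interleave mu lam (2 * j) = mu j.
Proof. unfold interleave. rewrite Nat.even_even, Nat.div2_double. reflexivity. Qed.

Lemma xi_odd mu lam j : interleave mu lam (S (2 * j)) = 1 - lam j.
Proof.
  unfold interleave. rewrite Nat.even_succ, Nat.odd_even, Nat.div2_succ_double. reflexivity.
Qed.

Section Seq.
Variable H : CHilbert.
Variable e : nat -> H.
Hypothesis he : forall j, nsq H (e j) = 1.
Variables mu lam : nat -> R.
Hypothesis hmu : forall j, 0 < mu j <= 1/2.
Hypothesis hlam : forall j, 0 < lam j < 1/2.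
Variables Smu Slam : R.
Hypothesis hSmu : infinite_sum mu Smu.
Hypothesis hSlam : infinite_sum lam Slam.
Variable z : Z.
Hypothesis hz : Smu - Slam = IZR z.

Definition xi := interleave mu lam.

Lemma hxi : forall k, 0 < xi k < 1.
Proof.
  intro k. unfold xi, interleave. destruct (Nat.even k).
  - pose proof (hmu (Nat.div2 k)). lra.
  - pose proof (hlam (Nat.div2 k)). lra.
Qed.

Definition rho j := (Smu - ps mu j) - (Slam - ps lam j).
Definition Rt j := Slam - ps lam j.

Lemma mu_pos j : 0 < mu j. Proof. apply hmu. Qed.
Lemma lam_pos j : 0 < lam j. Proof. apply hlam. Qed.

Lemma rho_lim eps : eps > 0 -> exists J, forall j, (J <= j)%nat -> Rabs (rho j) < eps.
Proof.
  intro he0. destruct (ps_lim mu Smu hSmu (eps/2)) as [N1 h1]; [lra|].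
  destruct (ps_lim lam Slam hSlam (eps/2)) as [N2 h2]; [lra|].
  exists (max N1 N2). intros j hj. specialize (h1 j ltac:(lia)). specialize (h2 j ltac:(lia)).
  unfold rho. apply Rabs_def2 in h1. apply Rabs_def2 in h2. apply Rabs_def1; lra.
Qed.

Lemma Rt_lim eps : eps > 0 -> exists J, forall j, (J <= j)%nat -> Rt j < eps.
Proof.
  intro he0. destruct (ps_lim lam Slam hSlam eps) as [N2 h2]; [lra|].
  exists N2. intros j hj. specialize (h2 j hj). unfold Rt. apply Rabs_def2 in h2. lra.
Qed.

Lemma Rt_S j : Rt j = lam j + Rt (S j).
Proof. unfold Rt. simpl. ring. Qed.

Lemma Rt_pos j : 0 < Rt j.
Proof.
  pose proof (ps_le_lim lam Slam lam_pos hSlam (S j)). simpl in H0. pose proof (lam_pos j).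
  unfold Rt. lra.
Qed.

Lemma rho_ge j : - Rt j <= rho j.
Proof.
  pose proof (ps_le_lim mu Smu mu_pos hSmu j). unfold rho, Rt. lra.
Qed.

Lemma rho_S j : rho j = mu j - lam j + rho (S j).
Proof. unfold rho. simpl. ring. Qed.

Lemma psxi_even j : ps xi (2 * j) = INR j + IZR z - rho j.
Proof.
  induction j.
  - simpl. unfold rho. simpl. rewrite <- hz. ring.
  - replace (2 * S j)%nat with (S (S (2 * j))) by lia.
    change (ps xi (S (S (2 * j)))) with (ps xi (2 * j) + xi (2 * j) + xi (S (2 * j))).
    rewrite IHj. unfold xi. rewrite xi_odd, xi_even. rewrite S_INR, (rho_S j). ring.
Qed.

Lemma psxi_odd j : ps xi (S (2 * j)) = INR j + IZR z - rho j + mu j.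
Proof. change (ps xi (S (2 * j))) with (ps xi (2 * j) + xi (2 * j)). rewrite psxi_even. unfold xi. rewrite xi_even. ring. Qed.


Lemma psxi_half j : INR j / 2 <= ps xi (2 * j).
Proof.
  induction j.
  - simpl. lra.
  - replace (2 * S j)%nat with (S (S (2 * j))) by lia.
    change (ps xi (S (S (2 * j)))) with (ps xi (2 * j) + xi (2 * j) + xi (S (2 * j))).
    unfold xi at 2 3. rewrite xi_odd, xi_even. rewrite S_INR.
    pose proof (hmu j). pose proof (hlam j). lra.
Qed.

Lemma Kof_unbounded M : exists N, (M <= Kof H e xi N)%nat.
Proof.
  exists (2 * (2 * M + 2))%nat. pose proof (r_T H e he xi hxi (2 * (2 * M + 2))) as h0.
  pose proof (psxi_half (2 * M + 2)) as h1. pose proof (r_bounds H e he xi hxi (2 * (2 * M + 2))) as h2.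
  assert (hlt : INR M < INR (Kof H e xi (2 * (2 * M + 2)))).
  { rewrite plus_INR, mult_INR in h1. replace (INR 2) with 2 in h1 by (simpl; ring). lra. }
  apply INR_lt in hlt. lia.
Qed.

Lemma IZR_of_K (K j : nat) : INR K - INR j - IZR z = IZR (Z.of_nat K - Z.of_nat j - z).
Proof. rewrite !minus_IZR, <- !INR_IZR_INZ. reflexivity. Qed.

Lemma frac_ratio (a b l : R) : 0 <= a -> a <= b -> 0 < l -> a / (l + a) <= b / (l + b).
Proof.
  intros ha hab hl.
  assert (ee : a / (l + a) - b / (l + b) = (l * (a - b)) * / ((l + a) * (l + b))) by (field; lra).
  assert (0 < / ((l + a) * (l + b))) by (apply Rinv_0_lt_compat; nra).
  assert (l * (a - b) <= 0) by nra. nra.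
Qed.

Lemma odd_beta J j : (forall j, (J <= j)%nat -> rho j < 0) -> (J <= S j)%nat -> Rt j < 1 ->
  beta H e xi (S (2 * j)) * beta H e xi (S (2 * j)) <= Rt (S j) / Rt j.
Proof.
  intros hJ hj hR1.
  set (k := S (2 * j)).
  pose proof (r_T H e he xi hxi k) as hT. unfold k in hT. rewrite psxi_odd, (rho_S j) in hT. fold k in hT.
  pose proof (r_bounds H e he xi hxi k) as hr.
  specialize (hJ (S j) hj). pose proof (rho_ge (S j)). pose proof (Rt_S j) as hRtS. pose proof (hlam j).
  set (d := lam j - rho (S j)).
  assert (hm : IZR (Z.of_nat (Kof H e xi k) - Z.of_nat j - z) = rof H e xi k + d).
  { rewrite <- IZR_of_K. unfold d. lra. }
  assert (hm1 : (Z.of_nat (Kof H e xi k) - Z.of_nat j - z)%Z = 1%Z).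
  { apply int_one. rewrite hm. unfold d. lra. }
  rewrite hm1 in hm. simpl in hm.
  assert (hxk : xi k = 1 - lam j) by (unfold xi, k; apply xi_odd).
  unfold beta. destruct (Rle_dec (xi k) (rof H e xi k)) as [hc|hc]; [unfold d in hm; lra|].
  rewrite sqrt_sqrt by (apply div_nonneg; lra).
  replace ((xi k - rof H e xi k) / (1 - rof H e xi k)) with ((- rho (S j)) / (lam j + - rho (S j)))
    by (assert (hrof : rof H e xi k = 1 - d) by lra; rewrite hrof, hxk; unfold d; field; lra).
  rewrite hRtS. apply frac_ratio; lra.
Qed.

Lemma caseAB :
  (forall dl, dl > 0 -> forall N, exists k, (N <= k)%nat /\ rof H e xi k <= dl) \/
  (forall N, exists s, (N <= s)%nat /\ forall dl, dl > 0 -> exists d, Pr H e xi s d <= dl).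
Proof.
  destruct (Classical_Prop.classic (forall J, exists j, (J <= j)%nat /\ 0 <= rho j)) as [hA|hB].
  - left. intros dl hdl N.
    destruct (rho_lim (Rmin dl (1/2))) as [J0 hJ0]; [apply Rmin_pos; lra|].
    destruct (hA (max J0 N)) as [j [hj hr]]. exists (2 * j)%nat. split; [lia|].
    specialize (hJ0 j ltac:(lia)). apply Rabs_def2 in hJ0.
    pose proof (Rmin_l dl (1/2)). pose proof (Rmin_r dl (1/2)).
    pose proof (r_T H e he xi hxi (2 * j)) as hT. rewrite psxi_even in hT.
    pose proof (r_bounds H e he xi hxi (2 * j)) as hb.
    assert (hm : IZR (Z.of_nat (Kof H e xi (2 * j)) - Z.of_nat j - z) = rof H e xi (2 * j) - rho j).
    { rewrite <- IZR_of_K. lra. }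
    assert (hm0 : (Z.of_nat (Kof H e xi (2 * j)) - Z.of_nat j - z)%Z = 0%Z).
    { apply int_zero. rewrite hm. lra. }
    rewrite hm0 in hm. change (IZR 0) with 0 in hm. lra.
  - right.
    assert (hB' : exists J, forall j, (J <= j)%nat -> rho j < 0).
    { apply Classical_Prop.NNPP. intro hn. apply hB. intro J. apply Classical_Prop.NNPP. intro hn2.
      apply hn. exists J. intros j hj. apply Rnot_le_lt. intro. apply hn2. exists j. auto. }
    destruct hB' as [J hJ]. intro N.
    destruct (Rt_lim 1) as [J1 hJ1]; [lra|].
    set (J2 := max (max J N) J1).
    exists (2 * J2)%nat. split; [lia|].
    assert (claim : forall i, Pr H e xi (2 * J2) (2 * i) <= Rt (J2 + i) / Rt J2).
    { induction i.
      - simpl. rewrite Nat.add_0_r. pose proof (Rt_pos J2). field_simplify; lra.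
      - replace (2 * S i)%nat with (S (S (2 * i))) by lia.
        change (Pr H e xi (2 * J2) (S (S (2 * i)))) with
          (Pr H e xi (2 * J2) (2 * i) * (beta H e xi (2 * J2 + 2 * i) * beta H e xi (2 * J2 + 2 * i))
           * (beta H e xi (2 * J2 + S (2 * i)) * beta H e xi (2 * J2 + S (2 * i)))).
        set (j := (J2 + i)%nat).
        replace (2 * J2 + 2 * i)%nat with (2 * j)%nat by (unfold j; lia).
        replace (2 * J2 + S (2 * i))%nat with (S (2 * j))%nat by (unfold j; lia).
        pose proof (beta_bounds H e he xi hxi (2 * j)) as hb0.
        pose proof (beta_bounds H e he xi hxi (S (2 * j))) as hb1.
        pose proof (odd_beta J j hJ ltac:(unfold j, J2; lia) (hJ1 j ltac:(unfold j, J2; lia))) as hod.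
        pose proof (Pr_bounds H e he xi hxi (2 * J2) (2 * i)) as hP.
        pose proof (Rt_pos j). pose proof (Rt_pos J2). pose proof (Rt_pos (S j)).
        replace (J2 + S i)%nat with (S j) by (unfold j; lia).
        set (P := Pr H e xi (2 * J2) (2 * i)) in *.
        set (b0 := beta H e xi (2 * j)) in *. set (b1 := beta H e xi (S (2 * j))) in *.
        assert (hbb : 0 <= b0 * b0 <= 1) by nra.
        assert (h1 : P * (b0 * b0) <= P * 1) by (apply Rmult_le_compat_l; lra).
        change (Rt (J2 + i)) with (Rt j) in IHi.
        assert (h2 : P * (b0 * b0) <= Rt j / Rt J2) by lra.
        assert (h3 : 0 <= P * (b0 * b0)) by nra.
        apply Rle_trans with ((Rt j / Rt J2) * (Rt (S j) / Rt j)).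
        + apply Rmult_le_compat; [exact h3| apply Rmult_le_pos; lra| exact h2| exact hod].
        + right. field. lra. }
    intros dl hdl.
    destruct (Rt_lim (dl * Rt J2)) as [J3 hJ3]; [pose proof (Rt_pos J2); nra|].
    exists (2 * J3)%nat. eapply Rle_trans; [apply claim|].
    specialize (hJ3 (J2 + J3)%nat ltac:(lia)). pose proof (Rt_pos J2).
    apply Rmult_le_reg_r with (Rt J2); [lra|]. field_simplify; lra.
Qed.

End Seq.

Section Final.
Variable H : CHilbert.

Lemma psum_ext (T1 T2 : nat -> operator H) x n :
  (forall j, T1 j x = T2 j x) -> psum T1 x n = psum T2 x n.
Proof. intro h. induction n; simpl; [reflexivity|]. rewrite IHn, h. reflexivity. Qed.

Lemma nsq_lt_of_vnorm (v : H) d : vnorm v < d -> nsq H v < d * d.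
Proof.
  unfold vnorm. intro h. pose proof (sqrt_pos (Re (inner v v))).
  pose proof (sqrt_sqrt (Re (inner v v)) (inner_self_re H v)). unfold nsq. nra.
Qed.

Lemma vnorm_lt_of_nsq (v : H) d : 0 < d -> nsq H v < d * d -> vnorm v < d.
Proof.
  intros hd h. unfold vnorm. rewrite <- (sqrt_square d) by lra. apply sqrt_lt_1_alt.
  split; [apply inner_self_re| exact h].
Qed.

Lemma re_inner_vopp (a b : H) : Re (inner (vopp a) b) = - Re (inner a b).
Proof. rewrite vopp_smul, inner_smul_l. simpl. ring. Qed.

Lemma nsq_diff_sym (y z : H) : nsq H (vadd y (vopp z)) = nsq H (vadd z (vopp y)).
Proof.
  rewrite !vopp_smul.
  replace (vadd y (smul (RtoC (-1)) z)) with (vadd (smul (RtoC 1) y) (smul (RtoC (-1)) z))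
    by (change (RtoC 1) with Defs.C1; rewrite smul_one; reflexivity).
  replace (vadd z (smul (RtoC (-1)) y)) with (vadd (smul (RtoC 1) z) (smul (RtoC (-1)) y))
    by (change (RtoC 1) with Defs.C1; rewrite smul_one; reflexivity).
  rewrite !nsq_comb_real. rewrite (inner_sym H z y). simpl. ring.
Qed.

Lemma diff_split (p q m : H) : vadd p (vopp q) = vadd (vadd p (vopp m)) (vadd m (vopp q)).
Proof.
  rewrite <- vadd_assoc. f_equal. rewrite vadd_assoc, (vadd_comm H (vopp m) m), vadd_opp, vadd_zero_l.
  reflexivity.
Qed.


Lemma inv_sqrt_sq o : 0 < o -> / sqrt o * / sqrt o = / o.
Proof.
  intro ho. pose proof (sqrt_lt_R0 o ho). rewrite <- (sqrt_sqrt o) at 3 by lra. field. lra.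
Qed.

Lemma out_eq (v x : H) (o : R) : 0 < o ->
  smul (RtoC o) (ROP H (smul (RtoC (/ sqrt o)) v) x) = ROP H v x.
Proof.
  intro ho. rewrite ROP_smul_real, smul_assoc, inv_sqrt_sq by lra.
  rewrite <- (smul_one H (ROP H v x)) at 2. f_equal. apply Ceq; simpl; field; lra.
Qed.

Lemma nsq_unit (v : H) (o : R) : 0 < o -> nsq H v = o -> nsq H (smul (RtoC (/ sqrt o)) v) = 1.
Proof.
  intros ho hv. rewrite nsq_smul, hv. unfold cm2. simpl.
  rewrite Rmult_0_l, Rplus_0_r, inv_sqrt_sq by lra. field. lra.
Qed.

Lemma PH_psum (e : nat -> H) x n : Re (inner (psum (Eop H e) x n) x) = PH H e x n.
Proof.
  induction n.
  - simpl. rewrite inner_zero_l. reflexivity.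
  - simpl psum. rewrite inner_add_l. simpl Re. rewrite IHn. unfold PH. simpl ps. fold (PH H e x n).
    f_equal. unfold Eop, ROP, hj, gg, cmod. rewrite sqrt_sqrt by apply cm2_nonneg.
    rewrite inner_smul_l, (inner_sym H (e n) x). unfold cm2. simpl. ring.
Qed.

End Final.

Theorem lemma3p8 (H : CHilbert) (A : operator H) (E : nat -> operator H)
  (mu lam : nat -> R) :
  (forall j, rank_one_projection (E j)) ->
  sot_sum E A ->
  (forall j, 0 < mu j <= 1/2) ->
  (forall j, 0 < lam j < 1/2) ->
  (exists Smu Slam : R, infinite_sum mu Smu /\ infinite_sum lam Slam /\
     exists z : Z, Smu - Slam = IZR z) ->
  Adm A (interleave mu lam).
Proof.
  intros hE hsot hmu hlam [Smu [Slam [hSmu [hSlam [z hz]]]]].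
  set (ef := fun j => proj1_sig (constructive_indefinite_description _ (hE j))).
  assert (hef : forall j, vnorm (ef j) = 1 /\ forall x, E j x = smul (inner x (ef j)) (ef j))
    by (intro j; exact (proj2_sig (constructive_indefinite_description _ (hE j)))).
  assert (he : forall j, nsq H (ef j) = 1).
  { intro j. destruct (hef j) as [h _]. unfold vnorm in h. unfold nsq.
    rewrite <- (sqrt_sqrt (Re (inner (ef j) (ef j)))) by apply inner_self_re. rewrite h. ring. }
  change (interleave mu lam) with (xi mu lam).
  set (X := xi mu lam).
  pose proof (hxi mu lam hmu hlam) as hx. fold X in hx.
  assert (hout : forall k, nsq H (outv H ef X k) = X k).
  { intro k. destruct (step_at H ef he X hx k) as [h|h]; apply h. }
  set (pu := fun k => smul (RtoC (/ sqrt (X k))) (outv H ef X k)).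
  split; [intro j; pose proof (hx j); lra|].
  split; [exists 1; intro j; pose proof (hx j); lra|].
  exists (fun k => ROP H (pu k)). split.
  { intro k. exists (pu k). split; [|intro; reflexivity].
    unfold vnorm. fold (nsq H (pu k)). unfold pu. rewrite (nsq_unit _ _ (X k)); [apply sqrt_1| apply hx| apply hout]. }
  intros x eps heps.
  assert (hEeq : forall n, psum E x n = psum (Eop H ef) x n).
  { intro n. apply psum_ext. intro j. unfold Eop, ROP. apply (proj2 (hef j)). }
  assert (hOeq : forall n, psum (fun j x0 => smul (RtoC (X j)) (ROP H (pu j) x0)) x n = psum (Oop H ef X) x n).
  { intro n. apply psum_ext. intro j. unfold pu, Oop. apply out_eq. apply hx. }
  assert (hPH : forall eta, eta > 0 -> exists M, forall a b, (M <= a)%nat -> (a <= b)%nat -> PH H ef x b - PH H ef x a <= eta).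
  { intros eta heta. set (Xn := nsq H x). assert (hXn : 0 <= Xn) by apply inner_self_re.
    set (dd := eta / (2 * (Xn + 1))). assert (hdd : dd > 0) by (unfold dd; apply Rdiv_lt_0_compat; lra).
    destruct (hsot x dd hdd) as [M hM]. exists M. intros a b ha hab.
    assert (ed : PH H ef x b - PH H ef x a = Re (inner (vadd (psum E x b) (vopp (psum E x a))) x)).
    { rewrite <- !PH_psum, <- !hEeq, inner_add_l. simpl Re. rewrite re_inner_vopp. ring. }
    rewrite ed.
    set (t := (Xn + 1) / eta). assert (ht : 0 < t) by (unfold t; apply Rdiv_lt_0_compat; lra).
    eapply Rle_trans; [apply (re_inner_le H _ x t ht)|].
    rewrite (diff_split H (psum E x b) (psum E x a) (A x)).
    pose proof (nsq_sum_le H (vadd (psum E x b) (vopp (A x))) (vadd (A x) (vopp (psum E x a)))) as hs.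
    rewrite (nsq_diff_sym H (A x) (psum E x a)) in hs.
    pose proof (nsq_lt_of_vnorm _ _ _ (hM b ltac:(lia))) as h1.
    pose proof (nsq_lt_of_vnorm _ _ _ (hM a ltac:(lia))) as h2.
    set (D := nsq H (vadd (vadd (psum E x b) (vopp (A x))) (vadd (A x) (vopp (psum E x a))))) in *.
    assert (hD : D <= 4 * (dd * dd)) by lra.
    assert (e1 : t * (4 * (dd * dd)) = eta / (Xn + 1)) by (unfold t, dd; field; lra).
    assert (e2 : Xn / t = Xn * eta / (Xn + 1)) by (unfold t; field; lra).
    assert (hD0 : 0 <= D) by apply inner_self_re.
    assert (t * D <= eta / (Xn + 1)) by (rewrite <- e1; apply Rmult_le_compat_l; lra).
    change (nsq H x) with Xn. rewrite e2.
    assert (eta / (Xn + 1) + Xn * eta / (Xn + 1) = eta) by (field; lra).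
    lra. }
  pose proof (g_conv H ef he X hx x hPH (Kof_unbounded H ef he mu lam hmu hlam)
               (caseAB H ef he mu lam hmu hlam Smu Slam hSmu hSlam z hz)) as hg.
  destruct (hg (eps / 2)) as [N2 hN2]; [lra|].
  destruct (hsot x (eps / 2)) as [M hM]; [lra|].
  destruct (Kof_unbounded H ef he mu lam hmu hlam M) as [N1 hN1].
  fold X in hN1. exists (max N1 N2). intros n hn.
  rewrite hOeq.
  pose proof (invariant H ef he X hx n x) as hinv.
  rewrite <- hEeq in hinv.
  assert (ho : psum (Oop H ef X) x n = vadd (psum E x (Kof H ef X n)) (vopp (ROP H (wof H ef X n) x))).
  { rewrite hinv. symmetry. apply vadd_cancel_r. }
  rewrite ho, vsub_rearr.
  apply vnorm_lt_of_nsq; [lra|].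
  eapply Rle_lt_trans; [apply nsq_sum_le|]. rewrite nsq_vopp.
  assert (hK : (M <= Kof H ef X n)%nat) by (pose proof (Kof_mono H ef he X hx N1 n ltac:(lia)); lia).
  pose proof (nsq_lt_of_vnorm _ _ _ (hM _ hK)) as h1.
  assert (h2 : nsq H (ROP H (wof H ef X n) x) <= (eps / 2) * (eps / 2)).
  { unfold ROP. rewrite nsq_smul. pose proof (r_bounds H ef he X hx n) as hr. unfold rof in hr.
    specialize (hN2 n ltac:(lia)). unfold gk, gg, cmod in hN2.
    pose proof (cm2_nonneg (inner x (wof H ef X n))).
    pose proof (sqrt_pos (cm2 (inner x (wof H ef X n)))).
    pose proof (sqrt_sqrt _ (cm2_nonneg (inner x (wof H ef X n)))).
    assert (cm2 (inner x (wof H ef X n)) <= (eps/2) * (eps/2)) by nra.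
    nra. }
  nra.
Qed.
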